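(* Let $p\in\mathbb R^I$ be a probability vector with positive entries, and for $i\in\mathcal I$ define $$R_i:=\frac{\sum_{j\in\mathcal J}\mathfrak d(i,j)\theta_j-\sum_{\ell\in\mathcal I}\mathfrak d(i,\ell)\hat\lambda_\ell}{p_i}.$$ If $\vartheta_p\neq0$, then all $R_i$ are nonzero and $\dfrac1{\vartheta_p}=\sum_{i\in\mathcal I}\dfrac1{R_i}$.
   Context: Network and parameters: $\mathcal I=\{1,\dots,I\}$ (customer classes), $\mathcal J=\{1,\dots,J\}$ (server pools), and $\mathcal E\subset\mathcal I\times\mathcal J$ is a set of edges such that the bipartite graph $\mathcal G=(\mathcal I\cup\mathcal J,\mathcal E)$ is a tree. Write $i\sim j$ iff $(i,j)\in\mathcal E$, $\mathcal J(i)=\{j:i\sim j\}$, $\mathcal I(j)=\{i:i\sim j\}$. $\mathbb R^{\mathcal G}$ denotes the arrays $[\xi_{ij}]\in\mathbb R^{I\times J}$ with $\xi_{ij}=0$ whenever $i\not\sim j$, and $\mathbb R^{\mathcal G}_+$ its elements with nonnegative entries. For each $n\in\mathbb N$ there are arrival rates $\lambda^n_i>0$, service rates $\mu^n_{ij}>0$ ($i\sim j$) and pool sizes $N^n_j\in\mathbb N$, such that as $n\to\infty$: $\lambda^n_i/n\to\lambda_i>0$, $N^n_j/n\to\nu_j>0$, $\mu^n_{ij}\to\mu_{ij}>0$, $\hat\lambda^n_i:=(\lambda^n_i-n\lambda_i)/\sqrt n\to\hat\lambda_i\in\mathbb R$, $\hat\mu^n_{ij}:=\sqrt n(\mu^n_{ij}-\mu_{ij})\to\hat\mu_{ij}\in\mathbb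 R$, $\hat\nu^n_j:=\sqrt n(N^n_j/n-\nu_j)\to\hat\nu_j\in\mathbb R$. Complete resource pooling is assumed: the linear program ''minimize $\max_{j}\sum_i\xi_{ij}$ over $\xi\in\mathbb R^{\mathcal G}_+$ subject to $\sum_j\mu_{ij}\nu_j\xi_{ij}=\lambda_i$ for all $i$'' has a unique solution $\xi^*$, and it satisfies $\sum_{i}\xi^*_{ij}=1$ for all $j$ and $\xi^*_{ij}>0$ for all $i\sim j$. Put $z^*_{ij}:=\xi^*_{ij}\nu_j$ and $\theta_j:=\hat\nu_j+\sum_{i\in\mathcal I(j)}(\hat\mu_{ij}/\mu_{ij})z^*_{ij}$. SWSS parameter: for a probability vector $p\in\mathbb R^I$ with positive entries, $\vartheta_p$ is the (unique) optimal value of the linear program: maximize $\vartheta$ over $(\vartheta,\kappa)\in\mathbb R\times\mathbb R^{\mathcal G}$ subject to $\hat\lambda_i\le\sum_{j\in\mathcal J(i)}\mu_{ij}\kappa_{ij}-\vartheta p_i$ for all $i\in\mathcal I$ and $\sum_{i\in\mathcal I(j)}\kappa_{ij}=\theta_j$ for all $j\in\mathcal J$. Gains: for $i\in\mathcal I$, $j\in\mathcal J$, let $(i_1,j_1,i_2,j_2,\dots,i_m,j_m)$ be the unique shortest path in $\mathcal G$ from $i=i_1$ to $j=j_m$, and set $\mathfrak d(i,j):=\mu_{i_1j_1}\prod_{k=1}^{m-1}\mu_{i_{k+1}j_{k+1}}/\mu_{i_{k+1}j_k}$. For $i\ne i'$ in $\mathcal I$ with shortest path $(i_1,j_1,\dots,j_{m-1},i_m)$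 from $i=i_1$ to $i'=i_m$, set $\mathfrak d(i,i'):=\prod_{k=1}^{m-1}\mu_{i_kj_k}/\mu_{i_{k+1}j_k}$; and $\mathfrak d(i,i):=1$. *)

(* Defs.v *)
From HB Require Import structures.
From mathcomp Require Import all_boot all_order all_algebra.
From mathcomp Require Import all_classical all_reals all_analysis.
From Stdlib Require Import ClassicalEpsilon.
Set Implicit Arguments. Unset Strict Implicit. Unset Printing Implicit Defensive.
Import Order.TTheory GRing.Theory Num.Theory.
Import numFieldNormedType.Exports.
Local Open Scope ring_scope.

Section ParallelServerDefs.
Variables (R : realType) (nI nJ : nat).
(* customer classes are 'I_nI, server pools are 'I_nJ;
   the edge set is given by E : 'I_nI -> 'I_nJ -> bool (i ~ j iff E i j) *)

Definition tg_adj (E : 'I_nI -> 'I_nJ -> bool) : rel ('I_nI + 'I_nJ) :=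
  fun u v => match u, v with
             | inl i, inr j => E i j
             | inr j, inl i => E i j
             | _, _ => false
             end.

Definition is_tree (E : 'I_nI -> 'I_nJ -> bool) : Prop :=
  (forall u v, connect (tg_adj E) u v) /\
  (#|[set e : 'I_nI * 'I_nJ | E e.1 e.2]| + 1 = nI + nJ)%N.

Definition in_RG (E : 'I_nI -> 'I_nJ -> bool) (x : 'I_nI -> 'I_nJ -> R) : Prop :=
  forall i j, ~~ E i j -> x i j = 0.

Definition crp_feasible E (mu : 'I_nI -> 'I_nJ -> R) (nu : 'I_nJ -> R)
  (lam : 'I_nI -> R) (xi : 'I_nI -> 'I_nJ -> R) : Prop :=
  [/\ in_RG E xi, (forall i j, 0 <= xi i j) &
      forall i, \sum_(j | E i j) mu i j * nu j * xi i j = lam i].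

(* objective max_j sum_i xi_ij (nonnegative for feasible xi) *)
Definition crp_obj (xi : 'I_nI -> 'I_nJ -> R) : R :=
  \big[Num.max/0]_(j : 'I_nJ) \sum_(i : 'I_nI) xi i j.

Definition crp_unique_solution E mu nu lam (xis : 'I_nI -> 'I_nJ -> R) : Prop :=
  [/\ crp_feasible E mu nu lam xis,
      (forall xi, crp_feasible E mu nu lam xi -> crp_obj xis <= crp_obj xi) &
      (forall xi, crp_feasible E mu nu lam xi -> crp_obj xi <= crp_obj xis ->
                  forall i j, xi i j = xis i j)].

(* theta_j = nuhat_j + sum_{i in I(j)} (muhat_ij / mu_ij) z*_ij, z*_ij = xi*_ij nu_j *)
Definition theta E (mu muhat : 'I_nI -> 'I_nJ -> R) (nu nuhat : 'I_nJ -> R)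
  (xis : 'I_nI -> 'I_nJ -> R) (j : 'I_nJ) : R :=
  nuhat j + \sum_(i | E i j) (muhat i j / mu i j) * (xis i j * nu j).

Definition swss_feasible E (mu : 'I_nI -> 'I_nJ -> R) (lamhat : 'I_nI -> R)
  (th : 'I_nJ -> R) (p : 'I_nI -> R) (vt : R) (kap : 'I_nI -> 'I_nJ -> R) : Prop :=
  [/\ in_RG E kap,
      (forall i, lamhat i <= \sum_(j | E i j) mu i j * kap i j - vt * p i) &
      (forall j, \sum_(i | E i j) kap i j = th j)].

Definition swss_optimal_value E mu lamhat th p (v : R) : Prop :=
  (exists kap, swss_feasible E mu lamhat th p v kap) /\
  (forall vt kap, swss_feasible E mu lamhat th p vt kap -> vt <= v).

(* A path (i_1, j_1, i_2, j_2, ..., i_m, j_m) from class i to pool j,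
   encoded as the nonempty sequence [:: (i_1,j_1); ...; (i_m,j_m)]. *)
Definition ij_path E (i : 'I_nI) (j : 'I_nJ) (s : seq ('I_nI * 'I_nJ)) : Prop :=
  if s is x :: _ then
    [/\ x.1 = i, (last x s).2 = j, all (fun e => E e.1 e.2) s &
        forall k, (k.+1 < size s)%N -> E (nth x s k.+1).1 (nth x s k).2]
  else False.

Definition ij_path_shortest E i j s : Prop :=
  ij_path E i j s /\ forall s', ij_path E i j s' -> (size s <= size s')%N.

Definition ij_path_gain (mu : 'I_nI -> 'I_nJ -> R) (s : seq ('I_nI * 'I_nJ)) : R :=
  if s is x :: _ then
    mu x.1 x.2 * \prod_(k < (size s).-1)
      (mu (nth x s k.+1).1 (nth x s k.+1).2 / mu (nth x s k.+1).1 (nth x s k).2)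
  else 0.

(* d(i,j), computed along the (unique) shortest path from i to j *)
Definition gainIJ E mu (i : 'I_nI) (j : 'I_nJ) : R :=
  epsilon (inhabits 0)
    (fun g => exists s, ij_path_shortest E i j s /\ g = ij_path_gain mu s).

(* A path (i_1, j_1, i_2, ..., j_{m-1}, i_m) between classes, encoded as the
   sequence of steps [:: (i_1,j_1,i_2); (i_2,j_2,i_3); ...; (i_{m-1},j_{m-1},i_m)]. *)
Fixpoint ii_path E (i i' : 'I_nI) (s : seq ('I_nI * 'I_nJ * 'I_nI)) : bool :=
  match s with
  | [::] => i == i'
  | st :: t => [&& st.1.1 == i, E st.1.1 st.1.2, E st.2 st.1.2 & ii_path E st.2 i' t]
  end.

Definition ii_path_shortest E i i' s : Prop :=
  ii_path E i i' s /\ forall s', ii_path E i i' s' -> (size s <= size s')%N.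

Definition ii_path_gain (mu : 'I_nI -> 'I_nJ -> R) (s : seq ('I_nI * 'I_nJ * 'I_nI)) : R :=
  \prod_(st <- s) (mu st.1.1 st.1.2 / mu st.2 st.1.2).

Definition gainII E mu (i i' : 'I_nI) : R :=
  if i == i' then 1 else
  epsilon (inhabits 0)
    (fun g => exists s, ii_path_shortest E i i' s /\ g = ii_path_gain mu s).

End ParallelServerDefs.

(* Main.v *)
Require Import Defs.
From HB Require Import structures.
From mathcomp Require Import all_boot all_order all_algebra.
From mathcomp Require Import all_classical all_reals all_analysis.
From Stdlib Require Import ClassicalEpsilon.
From mathcomp Require Import ring lra.
Import Order.TTheory GRing.Theory Num.Theory.
Import numFieldNormedType.Exports.
Local Open Scope ring_scope.
Lemma split_l m n (i : 'I_m) : fintype.split (lshift n i) = inl i.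
Proof. exact: (unsplitK (inl _ i)). Qed.
Lemma split_r m n (i : 'I_n) : fintype.split (rshift m i) = inr i.
Proof. exact: (unsplitK (inr _ i)). Qed.

Lemma sum_delta (R : realType) (n : nat) (i : 'I_n) (F : 'I_n -> R) :
  \sum_(k < n) (k == i)%:R * F k = F i.
Proof.
rewrite (bigD1 i) //= eqxx mul1r big1 ?addr0 // => k /negbTE ->; by rewrite mul0r.
Qed.

Section Aux.
Variables (R : realType) (nI nJ : nat) (E : 'I_nI -> 'I_nJ -> bool)
  (mu : 'I_nI -> 'I_nJ -> R).

Definition Mx : 'M[R]_(#|{: 'I_nI * 'I_nJ}|, nI + nJ) :=
  \matrix_(k, c) (let e := enum_val k in
     if E e.1 e.2 then
       match fintype.split c with inl i => (i == e.1)%:R * mu e.1 e.2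
                        | inr j => (j == e.2)%:R end
     else 0).

Definition Cx := cokermx Mx.

Lemma sum_pairs (F : 'I_nI * 'I_nJ -> R) :
  \sum_(k < #|{: 'I_nI * 'I_nJ}|) F (enum_val k) = \sum_i \sum_j F (i, j).
Proof. rewrite -(big_enum_val (A:= predT) F) pair_bigA /=; by apply: eq_big => // -[]. Qed.

Lemma sum_pairs2 (a : 'I_#|{: 'I_nI * 'I_nJ}| -> R) (G : 'I_nI * 'I_nJ -> R) :
  \sum_k a k * G (enum_val k) = \sum_i \sum_j a (enum_rank (i, j)) * G (i, j).
Proof.
rewrite -(sum_pairs (fun e => a (enum_rank e) * G e)).
by apply: eq_bigr => k _; rewrite enum_valK.
Qed.


Lemma coker_bal c0 i j : E i j ->
  - Cx (rshift nI j) c0 = Cx (lshift nJ i) c0 * mu i j.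
Proof.
move=> Eij.
have := mulmx_coker Mx; move/matrixP => /(_ (enum_rank (i,j)) c0).
rewrite mxE [RHS]mxE big_split_ord /=.
under eq_bigr do rewrite mxE enum_rankK /= Eij split_l.
under [X in _ + X = _]eq_bigr do rewrite mxE enum_rankK /= Eij split_r.
rewrite (eq_bigr (fun k => (k == i)%:R * (mu i j * Cx (lshift nJ k) c0))); last first.
  by move=> k _; rewrite mulrA.
rewrite sum_delta.
rewrite (eq_bigr (fun k => (k == j)%:R * (Cx (rshift nI k) c0))); last by [].
rewrite sum_delta.
move=> /eqP; rewrite addr_eq0 => /eqP H; by rewrite -H mulrC.
Qed.

Lemma realize (y : 'I_nI -> R) (t : 'I_nJ -> R) :
  (forall c0, \sum_i y i * Cx (lshift nJ i) c0 + \sum_j t j * Cx (rshift nI j) c0 = 0) ->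
  exists kap, [/\ in_RG E kap, forall i, \sum_(j | E i j) mu i j * kap i j = y i &
                 forall j, \sum_(i | E i j) kap i j = t j].
Proof.
move=> H.
pose x : 'rV[R]_(nI + nJ) := \row_c match fintype.split c with inl i => y i | inr j => t j end.
have : (x <= Mx)%MS.
  rewrite submxE; apply/eqP/matrixP => a c0; rewrite !mxE big_split_ord /=.
  under eq_bigr do rewrite mxE split_l.
  under [X in _ + X = _]eq_bigr do rewrite mxE split_r.
  exact: H.
move/submxP => [D xD].
exists (fun i j => if E i j then D 0 (enum_rank (i, j)) else 0); split.
- by move=> i j /negbTE ->.
- move=> i.
  have := congr1 (fun M : 'rV[R]_(nI + nJ) => M 0 (lshift nJ i)) xD; rewrite /= mxE split_l => ->.
  rewrite mxE.
  under [RHS]eq_bigr do rewrite /Mx mxE split_l.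
  rewrite (sum_pairs2 (fun k => D 0 k) (fun e => (if E e.1 e.2 then (i == e.1)%:R * mu e.1 e.2 else 0))) /=.
  rewrite (eq_bigr (fun i' => (i' == i)%:R * \sum_j (if E i' j then mu i' j * D 0 (enum_rank (i', j)) else 0))); last first.
    move=> i' _; case: eqP => [->|/eqP ne].
      rewrite eqxx mul1r; apply: eq_bigr => j _; case: (E i' j); by rewrite ?mul1r ?mulr0 // mulrC.
    rewrite eq_sym (negbTE ne) mul0r big1 // => j _; case: (E i' j); by rewrite ?mul0r ?mulr0.
  rewrite sum_delta big_mkcond /=; apply: eq_bigr => j _; by case: (E i j).
- move=> j.
  have := congr1 (fun M : 'rV[R]_(nI + nJ) => M 0 (rshift nI j)) xD; rewrite /= mxE split_r => ->.
  rewrite mxE.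
  under [RHS]eq_bigr do rewrite /Mx mxE split_r.
  rewrite (sum_pairs2 (fun k => D 0 k) (fun e => (if E e.1 e.2 then (j == e.2)%:R else 0))) /=.
  rewrite big_mkcond /=; apply: eq_bigr => i _.
  rewrite (bigD1 j) //= eqxx big1 ?addr0; first by case: (E i j); rewrite ?mulr1 ?mulr0.
  move=> j' /negbTE ne; rewrite eq_sym ne; case: (E i j'); by rewrite ?mulr0.
Qed.
End Aux.
Lemma conn_pred (T : finType) (e : rel T) (f : pred T) :
  (forall a b, e a b -> f a -> f b) -> forall a b, connect e a b -> f a -> f b.
Proof.
move=> H a b /connectP [s pth ->]; elim: s a pth => [|y s IH] a //= /andP[eay ps] fa.
exact: IH _ ps (H _ _ eay fa).
Qed.

Lemma conn_back (T : finType) (e : rel T) (Q : T -> Prop) :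
  (forall a b, e a b -> Q b -> Q a) -> forall a b, connect e a b -> Q b -> Q a.
Proof.
move=> H a b /connectP [s pth ->]; elim: s a pth => [|y s IH] a //= /andP[eay ps] fa.
exact: H _ _ eay (IH _ ps fa).
Qed.

Lemma ex_shortest (T : Type) (P : seq T -> Prop) :
  (exists s, P s) -> exists s, P s /\ forall s', P s' -> (size s <= size s')%N.
Proof.
move=> [s0 Ps0]; apply: NNPP => Hn.
suff H : forall n s, P s -> (n <= size s)%N by have := H (size s0).+1 s0 Ps0; rewrite ltnn.
elim=> [//|n IH] s Ps; rewrite ltn_neqAle IH // andbT; apply/eqP => En.
apply: Hn; exists s; split => // s' Ps'; rewrite -En; exact: IH.
Qed.

Section Aux2.
Variables (R : realType) (nI nJ : nat) (E : 'I_nI -> 'I_nJ -> bool)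
  (mu : 'I_nI -> 'I_nJ -> R).
Hypothesis mupos : forall i j, E i j -> 0 < mu i j.
Hypothesis conn : forall u v, connect (tg_adj E) u v.

Definition bal (w : 'I_nI -> R) (u : 'I_nJ -> R) := forall i j, E i j -> u j = w i * mu i j.

Definition vval (w : 'I_nI -> R) (u : 'I_nJ -> R) (v : 'I_nI + 'I_nJ) :=
  match v with inl i => w i | inr j => u j end.

Lemma bal_adj w u a b : bal w u -> tg_adj E a b ->
  ((vval w u a == 0) = (vval w u b == 0)) /\ ((0 < vval w u a) = (0 < vval w u b)).
Proof.
move=> B; case: a => [i|j]; case: b => [i'|j'] //= Eij.
- rewrite (B _ _ Eij) mulf_eq0 (negbTE (lt0r_neq0 (mupos _ _ Eij))) orbF pmulr_lgt0 //; exact: mupos.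
- rewrite (B _ _ Eij) mulf_eq0 (negbTE (lt0r_neq0 (mupos _ _ Eij))) orbF pmulr_lgt0 //; exact: mupos.
Qed.

Lemma bal_zero w u i0 : bal w u -> w i0 = 0 -> (forall i, w i = 0) /\ (forall j, u j = 0).
Proof.
move=> B w0.
have H : forall v, vval w u v == 0.
  move=> v; apply: (@conn_pred _ _ (fun v => vval w u v == 0)) (conn (inl i0) v) _.
    by move=> a b ab; rewrite (bal_adj _ _ _ _ B ab).1.
  by rewrite /= w0.
by split => [i|j]; apply/eqP; [exact: (H (inl i)) | exact: (H (inr j))].
Qed.

Lemma bal_pos w u i0 : bal w u -> 0 < w i0 -> (forall i, 0 < w i) /\ (forall j, 0 < u j).
Proof.
move=> B w0.
have H : forall v, 0 < vval w u v.
  move=> v; apply: (@conn_pred _ _ (fun v => 0 < vval w u v)) (conn (inl i0) v) _.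
    by move=> a b ab; rewrite (bal_adj _ _ _ _ B ab).2.
  by rewrite /= w0.
by split => [i|j]; [exact: (H (inl i)) | exact: (H (inr j))].
Qed.

Lemma bal_prop w u w' u' i0 : bal w u -> bal w' u' -> w i0 != 0 ->
  (forall i, w' i = w' i0 / w i0 * w i) /\ (forall j, u' j = w' i0 / w i0 * u j).
Proof.
move=> B B' nz.
have B2 : bal (fun i => w' i - w' i0 / w i0 * w i) (fun j => u' j - w' i0 / w i0 * u j).
  move=> i j Eij; rewrite (B _ _ Eij) (B' _ _ Eij); ring.
have [] := bal_zero _ _ i0 B2.
  by rewrite mulfVK // subrr.
by move=> H1 H2; split => [i|j]; apply/eqP; rewrite -subr_eq0; apply/eqP.
Qed.

Lemma ij_exists i j : exists s, ij_path E i j s.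
Proof.
pose Q v := match v with
  | inl i1 => exists s, ij_path E i1 j s
  | inr j1 => j1 = j \/ exists i2 s, E i2 j1 /\ ij_path E i2 j s end.
apply: (@conn_back _ _ Q) (conn (inl i) (inr j)) _; last by left.
move=> [i1|j1] [i2|j2] //= e.
- case=> [Ej|[i3 [s [E3 P3]]]].
    subst j2; exists [:: (i1, j)]; split => //=; first by rewrite e.
  case: s P3 => [//|x t] [x1 xl xall xc].
  exists ((i1, j2) :: x :: t); split => //=.
  + by rewrite e.
  + case=> [_|k]; first by rewrite /= x1.
    move=> Hk; have := xc k Hk.
    change (nth (i1, j2) [:: (i1, j2), x & t] k.+1) with (nth (i1, j2) (x :: t) k).
    have Hk' : (k < size (x :: t))%N by apply: ltnW.
    by rewrite (@set_nth_default _ (x :: t) x (i1, j2) k.+1 Hk) (set_nth_default x (i1, j2) Hk').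
- move=> [s P]; right; exists i2, s; split=> //.
Qed.

Lemma ii_exists i i' : exists s, ii_path E i i' s.
Proof.
pose Q v := match v with
  | inl i1 => exists s, ii_path E i1 i' s
  | inr j1 => exists i2 s, E i2 j1 /\ ii_path E i2 i' s end.
apply: (@conn_back _ _ Q) (conn (inl i) (inl i')) _; last by exists [::] => /=.
move=> [i1|j1] [i2|j2] //= e.
- move=> [i3 [s [E3 P3]]]; exists ((i1, j2, i3) :: s) => /=; by rewrite eqxx e E3 P3.
- move=> [s P]; exists i2, s; split=> //.
Qed.

Variables (w : 'I_nI -> R) (u : 'I_nJ -> R).
Hypothesis B : bal w u.
Hypothesis wpos : forall i, 0 < w i.
Hypothesis upos : forall j, 0 < u j.

Lemma mu_wu i j : E i j -> mu i j = u j / w i.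
Proof. move=> Eij; rewrite (B _ _ Eij) mulrAC mulfV ?mul1r //; exact: lt0r_neq0. Qed.

Lemma gain_tele x t : all (fun e => E e.1 e.2) (x :: t) ->
  (forall k, (k.+1 < size (x :: t))%N -> E (nth x (x :: t) k.+1).1 (nth x (x :: t) k).2) ->
  ij_path_gain mu (x :: t) = u (last x t).2 / w x.1.
Proof.
elim: t x => [|y t IH] x /=.
  by rewrite big_ord0 mulr1 andbT => Ex _; rewrite mu_wu.
move=> /andP[Ex /andP[Ey At]] Hc.
have Hyx : E y.1 x.2 by have := Hc 0%N; apply.
have IH2 : (forall k, (k.+1 < size (y :: t))%N ->
     E (nth y (y :: t) k.+1).1 (nth y (y :: t) k).2).
  move=> k Hk; have := Hc k.+1 Hk.
  change (nth x [:: x, y & t] k.+2) with (nth x (y :: t) k.+1).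
  change (nth x [:: x, y & t] k.+1) with (nth x (y :: t) k).
  by rewrite (set_nth_default y x Hk) (set_nth_default y x (ltnW Hk)).
have IHv : ij_path_gain mu (y :: t) = u (last y t).2 / w y.1.
  apply: IH IH2; by rewrite /= Ey At.
move: IHv; rewrite /ij_path_gain => IHv.
rewrite big_ord_recl /=.
rewrite (eq_bigr (fun k : 'I_(size t) => mu (nth y (y :: t) k.+1).1 (nth y (y :: t) k.+1).2 / mu (nth y (y :: t) k.+1).1 (nth y (y :: t) k).2)); last first.
  move=> k _; have Hk : (k.+1 < size (y :: t))%N by rewrite /= ltnS.
  rewrite /bump /= add0n.
  have Hk1 : (k < size t)%N := ltn_ord k.
  have Hk2 : (k < size (y :: t))%N by apply: ltnW.
  by rewrite (set_nth_default y x Hk1) (set_nth_default y x Hk2).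
set P := \prod_(i < size t) _.
have -> : mu x.1 x.2 * (mu y.1 y.2 / mu y.1 x.2 * P) = mu x.1 x.2 / mu y.1 x.2 * (mu y.1 y.2 * P) by ring.
rewrite IHv (mu_wu _ _ Ex) (mu_wu _ _ Hyx).
have := wpos x.1; have := wpos y.1; have := upos x.2.
move=> /lt0r_neq0 h1 /lt0r_neq0 h2 /lt0r_neq0 h3.
field; by rewrite h1 h2 h3.
Qed.

Lemma ii_tele s i i' : ii_path E i i' s -> ii_path_gain mu s = w i' / w i.
Proof.
elim: s i => [|st s IH] i /=.
  by move=> /eqP ->; rewrite /ii_path_gain big_nil divff //; exact: lt0r_neq0.
move=> /and4P[/eqP e1 E1 E2 P]; rewrite /ii_path_gain big_cons -/(ii_path_gain mu s).
rewrite (IH _ P) (mu_wu _ _ E1) (mu_wu _ _ E2) e1.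
have := wpos i; have := wpos st.2; have := upos st.1.2.
move=> /lt0r_neq0 h1 /lt0r_neq0 h2 /lt0r_neq0 h3; field; by rewrite h1 h2 h3.
Qed.

Lemma gainIJ_val i j : gainIJ E mu i j = u j / w i.
Proof.
rewrite /gainIJ.
have := @epsilon_spec R (inhabits 0)
  (fun g => exists s, ij_path_shortest E i j s /\ g = ij_path_gain mu s).
case.
  have [s0 [P0 M0]] := ex_shortest _ _ (ij_exists i j).
  by exists (ij_path_gain mu s0), s0.
move=> s' [[P' _] ->]; case: s' P' => [//|x t] [x1 xl xall xc].
by rewrite gain_tele // xl x1.
Qed.

Lemma gainII_val i i' : gainII E mu i i' = w i' / w i.
Proof.
rewrite /gainII; case: eqP => [->|_].
  by rewrite divff //; exact: lt0r_neq0.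
have := @epsilon_spec R (inhabits 0)
  (fun g => exists s, ii_path_shortest E i i' s /\ g = ii_path_gain mu s).
case.
  have [s0 [P0 M0]] := ex_shortest _ _ (ii_exists i i').
  by exists (ii_path_gain mu s0), s0.
move=> s' [[P' _] ->]; exact: ii_tele.
Qed.

End Aux2.
Arguments bal {R nI nJ}.
Arguments Cx {R nI nJ}.
Arguments coker_bal {R nI nJ E mu}.
Arguments realize {R nI nJ E mu}.
Arguments bal_zero {R nI nJ E mu} _ _ {w u}.
Arguments bal_pos {R nI nJ E mu} _ _ {w u}.
Arguments bal_prop {R nI nJ E mu} _ _ {w u w' u'}.
Arguments gainIJ_val {R nI nJ E mu} _ {w u}.
Arguments gainII_val {R nI nJ E mu} _ {w u}.

Local Open Scope classical_set_scope.
Local Open Scope ring_scope.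
Lemma exch (R : realType) nI nJ (E : 'I_nI -> 'I_nJ -> bool) (F : 'I_nI -> 'I_nJ -> R) :
  \sum_i \sum_(j | E i j) F i j = \sum_j \sum_(i | E i j) F i j.
Proof.
under eq_bigr do rewrite big_mkcond /=.
rewrite exchange_big /=; apply: eq_bigr => j _; by rewrite [RHS]big_mkcond.
Qed.

Theorem corollary1 (R : realType) (nI nJ : nat) (E : 'I_nI -> 'I_nJ -> bool)
  (lamn : nat -> 'I_nI -> R) (mun : nat -> 'I_nI -> 'I_nJ -> R) (Nn : nat -> 'I_nJ -> nat)
  (lam : 'I_nI -> R) (mu : 'I_nI -> 'I_nJ -> R) (nu : 'I_nJ -> R)
  (lamhat : 'I_nI -> R) (muhat : 'I_nI -> 'I_nJ -> R) (nuhat : 'I_nJ -> R)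
  (xis : 'I_nI -> 'I_nJ -> R) (p : 'I_nI -> R) (vp : R) :
  is_tree E ->
  (forall n i, 0 < lamn n i) ->
  (forall n i j, E i j -> 0 < mun n i j) ->
  (forall i, 0 < lam i) -> (forall j, 0 < nu j) -> (forall i j, E i j -> 0 < mu i j) ->
  (forall i, (fun n : nat => lamn n i / n%:R) @ \oo --> lam i) ->
  (forall j, (fun n : nat => (Nn n j)%:R / n%:R) @ \oo --> nu j) ->
  (forall i j, E i j -> (fun n : nat => mun n i j) @ \oo --> mu i j) ->
  (forall i, (fun n : nat => (lamn n i - n%:R * lam i) / Num.sqrt n%:R) @ \oo --> lamhat i) ->
  (forall i j, E i j ->
     (fun n : nat => Num.sqrt n%:R * (mun n i j - mu i j)) @ \oo --> muhat i j) ->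
  (forall j, (fun n : nat => Num.sqrt n%:R * ((Nn n j)%:R / n%:R - nu j)) @ \oo --> nuhat j) ->
  crp_unique_solution E mu nu lam xis ->
  (forall j, \sum_i xis i j = 1) ->
  (forall i j, E i j -> 0 < xis i j) ->
  (forall i, 0 < p i) -> \sum_i p i = 1 ->
  swss_optimal_value E mu lamhat (theta E mu muhat nu nuhat xis) p vp ->
  vp != 0 ->
  let Ri := fun i : 'I_nI =>
    (\sum_(j : 'I_nJ) gainIJ E mu i j * theta E mu muhat nu nuhat xis j
     - \sum_(l : 'I_nI) gainII E mu i l * lamhat l) / p i in
  (forall i, Ri i != 0) /\ vp^-1 = \sum_(i : 'I_nI) (Ri i)^-1.
Proof.
move=> [conn _] _ _ _ _ mupos _ _ _ _ _ _ _ _ _ ppos psum [[kap0 F0] Hmax] vpnz Ri.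
set th := theta E mu muhat nu nuhat xis in F0 Hmax Ri *.
have [i0 _ | H0] := pickP (@predT 'I_nI); last first.
  by move: psum; rewrite big_pred0 // => /eqP; rewrite eq_sym oner_eq0.
set C := Cx E mu.
have cb : forall c0, bal E mu (fun i => C (lshift nJ i) c0) (fun j => - C (rshift nI j) c0).
  by move=> c0 i j Eij; exact: coker_bal.
have feas : forall vt y, (forall c0, \sum_i y i * C (lshift nJ i) c0 + \sum_j th j * C (rshift nI j) c0 = 0) ->
    (forall i, lamhat i <= y i - vt * p i) -> vt <= vp.
  move=> vt y Hc Hy; have [kap [K1 K2 K3]] := realize y th Hc.
  apply: (Hmax vt kap); split => // i; by rewrite K2.
have [c0 Hc0] : exists c0, C (lshift nJ i0) c0 != 0.
  apply: NNPP => Hn.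
  have Z : forall c0, (forall i, C (lshift nJ i) c0 = 0) /\ (forall j, C (rshift nI j) c0 = 0).
    move=> c0.
    have w0 : C (lshift nJ i0) c0 = 0.
      by apply: NNPP => H; apply: Hn; exists c0; apply/eqP.
    have [H1 H2] := bal_zero mupos conn i0 (cb c0) w0.
    split => // j; by rewrite -[LHS]opprK H2 oppr0.
  suff : vp + 1 <= vp by move=> H; lra.
  apply: (feas (vp + 1) (fun i => lamhat i + (vp + 1) * p i)) => [c|i]; last by rewrite addrK.
  by rewrite !big1 ?addr0 // => k _; rewrite ?(Z c).1 ?(Z c).2 mulr0.
pose a := C (lshift nJ i0) c0.
pose w := fun i => C (lshift nJ i) c0 / a.
pose u := fun j => - C (rshift nI j) c0 / a.
have Bw : bal E mu w u.
  move=> i j Eij; rewrite /u /w (cb c0 i j Eij); by rewrite mulrAC.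
have w0 : 0 < w i0 by rewrite /w divff // ltr01.
have [wpos upos] := bal_pos mupos conn i0 Bw w0.
have hyp : forall y, \sum_i w i * y i = \sum_j u j * th j ->
   forall c, \sum_i y i * C (lshift nJ i) c + \sum_j th j * C (rshift nI j) c = 0.
  move=> y Hy c.
  have [P1 P2] := bal_prop mupos conn i0 Bw (cb c) (lt0r_neq0 (wpos i0)).
  set al := C (lshift nJ i0) c / w i0 in P1 P2.
  have -> : \sum_i y i * C (lshift nJ i) c = al * \sum_i w i * y i.
    rewrite mulr_sumr; apply: eq_bigr => i _; rewrite P1; ring.
  have -> : \sum_j th j * C (rshift nI j) c = - (al * \sum_j u j * th j).
    rewrite mulr_sumr -sumrN; apply: eq_bigr => j _.
    rewrite -[C _ c]opprK P2; ring.
  by rewrite Hy subrr.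
pose P := \sum_i w i * p i.
pose N := \sum_j u j * th j - \sum_i w i * lamhat i.
have Ppos : 0 < P.
  rewrite /P (bigD1 i0) //=.
  have h1 : 0 < w i0 * p i0 by rewrite mulr_gt0.
  have h2 : 0 <= \sum_(i | i != i0) w i * p i.
    by apply: sumr_ge0 => i _; rewrite mulr_ge0 // ltW.
  lra.
have ub : forall vt kap, swss_feasible E mu lamhat th p vt kap -> vt * P <= N.
  move=> vt kap [K1 K2 K3].
  have : \sum_i w i * lamhat i <= \sum_i w i * (\sum_(j | E i j) mu i j * kap i j - vt * p i).
    by apply: ler_sum => i _; rewrite ler_wpM2l // ltW.
  have -> : \sum_i w i * (\sum_(j | E i j) mu i j * kap i j - vt * p i) =
     \sum_i \sum_(j | E i j) u j * kap i j - vt * P.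
    rewrite /P mulr_sumr -sumrB; apply: eq_bigr => i _.
    rewrite mulrBr mulr_sumr mulrCA; congr (_ - _); apply: eq_bigr => j Eij.
    by rewrite (Bw i j Eij) mulrA.
  rewrite exch.
  have -> : \sum_j \sum_(i | E i j) u j * kap i j = \sum_j u j * th j.
    by apply: eq_bigr => j _; rewrite -mulr_sumr K3.
  rewrite /N; lra.
have vple : vp <= N / P by rewrite ler_pdivlMr //; exact: ub F0.
have vpge : N / P <= vp.
  apply: (feas (N / P) (fun i => lamhat i + N / P * p i)); last by move=> i; rewrite addrK.
  apply: hyp.
  have -> : \sum_i w i * (lamhat i + N / P * p i) = \sum_i w i * lamhat i + N / P * P.
    by rewrite /P mulr_sumr -big_split /=; apply: eq_bigr => i _; ring.
  rewrite divfK ?lt0r_neq0 // /N; ring.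
have vpE : vp = N / P by apply/eqP; rewrite eq_le vple vpge.
have Nnz : N != 0 by move: vpnz; rewrite vpE; apply: contra => /eqP ->; rewrite mul0r.
have RiE : forall i, Ri i = N / (w i * p i).
  move=> i; rewrite /Ri.
  under eq_bigr do rewrite (gainIJ_val conn Bw wpos upos).
  under [X in _ - X]eq_bigr do rewrite (gainII_val conn Bw wpos upos).
  have -> : \sum_k u k / w i * th k = (\sum_k u k * th k) / w i.
    by rewrite mulr_suml; apply: eq_bigr => k _; ring.
  have -> : \sum_k w k / w i * lamhat k = (\sum_k w k * lamhat k) / w i.
    by rewrite mulr_suml; apply: eq_bigr => k _; ring.
  have h1 := lt0r_neq0 (wpos i); have h2 := lt0r_neq0 (ppos i).
  rewrite /N; field; by rewrite h1 h2.
split.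
  move=> i; rewrite RiE; apply: mulf_neq0 => //; rewrite invr_eq0 mulf_neq0 //; exact: lt0r_neq0.
rewrite vpE invf_div.
under eq_bigr do rewrite RiE invf_div.
by rewrite /P mulr_suml.
Qed.
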